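(* Let $r \geq 3$. If $\mathcal{F}$ is a $\{C_2, C_3, K_{2,3}\}$-free $r$-uniform $r$-partite hypergraph with $n$ vertices in each part, then \[ |E(\mathcal{F})| \leq \sqrt{\frac{2}{r-1}}\, n^{3/2} + n. \] Furthermore, for any $q$ that is a power of an odd prime, there is a $3$-uniform $3$-partite $\{C_2, C_3, K_{2,3}\}$-free hypergraph with $q^2$ vertices in each part and $q^2(q-1)$ edges.
   Context: Let $G$ be a multigraph and $\mathcal{F}$ a hypergraph. $\mathcal{F}$ is a Berge-$G$ if there is a bijection $f: E(G) \to E(\mathcal{F})$ with $e \subseteq f(e)$ for every $e \in E(G)$. For a family $\mathcal{G}$ of multigraphs, a hypergraph $\mathcal{H}$ is $\mathcal{G}$-free if for every $G \in \mathcal{G}$, $\mathcal{H}$ contains no subhypergraph isomorphic to a Berge-$G$. $C_2$ is the multigraph consisting of two vertices joined by two parallel edges (so $C_2$-free means linear: two distinct edges share at most one vertex), $C_3$ is the triangle, $K_{2,3}$ the complete bipartite graph with parts of sizes $2$ and $3$. An $r$-uniform hypergraph is $r$-partite if its vertex set is partitioned into $r$ parts such that each edge contains exactly one vertex from each part. *)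

(* Defs.v *)
From HB Require Import structures.
From mathcomp Require Import all_boot all_order all_algebra.
Set Implicit Arguments. Unset Strict Implicit. Unset Printing Implicit Defensive.
Import Order.TTheory GRing.Theory Num.Theory.

Definition uniform (V : finType) (r : nat) (E : {set {set V}}) : Prop :=
  forall e, e \in E -> #|e| = r.

Definition partite (V : finType) (r : nat) (part : V -> 'I_r) (n : nat)
    (E : {set {set V}}) : Prop :=
  (forall i : 'I_r, #|[set v | part v == i]| = n) /\
  (forall e, e \in E -> forall i : 'I_r, #|[set v in e | part v == i]| = 1).

(* A multigraph G with vertex type W and edge type EG; each edge g has the two
   endpoints (ends g).1 and (ends g).2.  E contains a Berge-G iff there are an
   injective vertex map phi and an injective (bijective onto its image) edge map
   f into E with phi(endpoints of g) contained in f g. *)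
Definition berge_contains (W EG : finType) (ends : EG -> W * W)
    (V : finType) (E : {set {set V}}) : Prop :=
  exists (phi : W -> V) (f : EG -> {set V}),
    injective phi /\ injective f /\
    forall g, [/\ f g \in E, phi (ends g).1 \in f g & phi (ends g).2 \in f g].

Definition C2_ends (g : 'I_2) : 'I_2 * 'I_2 := (ord0, ord_max).
Definition C3_ends (g : 'I_3) : 'I_3 * 'I_3 := (g, inord ((g + 1) %% 3)).
Definition K23_ends (g : 'I_2 * 'I_3) : ('I_2 + 'I_3) * ('I_2 + 'I_3) :=
  (inl g.1, inr g.2).

Definition C2_C3_K23_free (V : finType) (E : {set {set V}}) : Prop :=
  ~ berge_contains C2_ends E /\ ~ berge_contains C3_ends E /\
  ~ berge_contains K23_ends E.

(* Main.v *)
Require Import Defs.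
From HB Require Import structures.
From mathcomp Require Import all_boot all_order all_algebra all_field.
From mathcomp Require Import zify ring lra.
Import Order.TTheory GRing.Theory Num.Theory.
Set Implicit Arguments. Unset Strict Implicit. Unset Printing Implicit Defensive.

Section Berge.
Variables (V : finType) (E : {set {set V}}).

Lemma mkC2 u v e1 e2 : u != v -> e1 != e2 -> e1 \in E -> e2 \in E ->
  u \in e1 -> v \in e1 -> u \in e2 -> v \in e2 -> berge_contains C2_ends E.
Proof.
move=> uv e12 E1 E2 u1 v1 u2 v2.
exists (fun i : 'I_2 => nth u [:: u; v] i), (fun g : 'I_2 => nth e1 [:: e1; e2] g).
split; [|split].
- move=> i j /eqP; rewrite nth_uniq ?size_tuple //=; last by rewrite inE uv.
  by move/eqP/val_inj.
- move=> i j /eqP; rewrite nth_uniq //=; last by rewrite inE e12.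
  by move/eqP/val_inj.
- by case=> [[|[|]] ?] //=; split.
Qed.

Lemma mkC3 a b c f0 f1 f2 : uniq [:: a; b; c] -> uniq [:: f0; f1; f2] ->
  f0 \in E -> f1 \in E -> f2 \in E ->
  a \in f0 -> b \in f0 -> b \in f1 -> c \in f1 -> c \in f2 -> a \in f2 ->
  berge_contains C3_ends E.
Proof.
move=> U1 U2 E0 E1 E2 a0 b0 b1 c1 c2 a2.
exists (fun i : 'I_3 => nth a [:: a; b; c] i), (fun g : 'I_3 => nth f0 [:: f0; f1; f2] g).
split; [|split].
- by move=> i j /eqP; rewrite nth_uniq //= => /eqP/val_inj.
- by move=> i j /eqP; rewrite nth_uniq //= => /eqP/val_inj.
- case=> [[|[|[|]]] ?] //=; rewrite /C3_ends /= inordK //.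
Qed.



Definition codeW (x : 'I_2 + 'I_3) : nat := match x with inl i => val i | inr j => 2 + val j end.
Definition codeG (g : 'I_2 * 'I_3) : nat := val g.1 * 3 + val g.2.

Lemma codeW_inj : injective codeW.
Proof.
case=> [i|i] [j|j] /=.
- by move=> /val_inj ->.
- by move: (ltn_ord i) => + H; rewrite H.
- by move: (ltn_ord j) => + H; rewrite -H.
- by move=> /eqP; rewrite eqn_add2l => /eqP /val_inj ->.
Qed.

Lemma codeW_lt x : codeW x < 5.
Proof. by case: x => [[i ?]|[i ?]] /=; lia. Qed.

Lemma codeG_inj : injective codeG.
Proof.
move=> [[i ?] [j ?]] [[i' ?] [j' ?]] /= /eqP H.
have [E1 E2] : i = i' /\ j = j' by rewrite /codeG /= in H; lia.
subst; congr pair; exact: val_inj.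
Qed.

Lemma codeG_lt g : codeG g < 6.
Proof. by case: g => [[i ?] [j ?]]; rewrite /codeG /=; lia. Qed.

Lemma mkK23 u w x1 x2 x3 a1 a2 a3 b1 b2 b3 :
  uniq [:: u; w; x1; x2; x3] -> uniq [:: a1; a2; a3; b1; b2; b3] ->
  all (mem E) [:: a1; a2; a3; b1; b2; b3] ->
  u \in a1 -> u \in a2 -> u \in a3 -> w \in b1 -> w \in b2 -> w \in b3 ->
  x1 \in a1 -> x2 \in a2 -> x3 \in a3 -> x1 \in b1 -> x2 \in b2 -> x3 \in b3 ->
  berge_contains K23_ends E.
Proof.
move=> U1 U2 AE ua1 ua2 ua3 wb1 wb2 wb3 x1a x2a x3a x1b x2b x3b.
exists (fun i => nth u [:: u; w; x1; x2; x3] (codeW i)),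
       (fun g => nth a1 [:: a1; a2; a3; b1; b2; b3] (codeG g)).
split; [|split].
- by move=> i j /eqP; rewrite nth_uniq ?codeW_lt // => /eqP/codeW_inj.
- by move=> i j /eqP; rewrite nth_uniq ?codeG_lt // => /eqP/codeG_inj.
- move: AE; rewrite /= !andbT => /and5P[? ? ? ? /andP[? ?]].
  case=> [[[|[|i]] Hi] [[|[|[|j]]] Hj]] //=; try split => //.
Qed.
End Berge.


Lemma card_sum (T : finType) (A : {set T}) (P : pred T) :
  #|[set x in A | P x]| = \sum_(x in A) (P x : nat).
Proof.
rewrite -sum1_card big_mkcond [RHS]big_mkcond /=; apply: eq_bigr => x _.
by rewrite inE; case: (x \in A); case: (P x).
Qed.

Lemma card_offdiag (T : finType) (A : {set T}) :
  #|[set p : T * T | [&& p.1 \in A, p.2 \in A & p.1 != p.2]]| = #|A| * (#|A| - 1).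
Proof.
have -> : [set p : T * T | [&& p.1 \in A, p.2 \in A & p.1 != p.2]] =
          setX A A :\: [set (a, a) | a in A].
  apply/setP => [[a b]]; rewrite !inE /=.
  case: (boolP (a \in A)) => Ha; case: (boolP (b \in A)) => Hb //=; last first.
  - by rewrite andbF.
  - by rewrite andbF.
  - by rewrite andbF.
  case: eqP => [<-|ne]; first by rewrite (imset_f (fun a => (a, a)) Ha).
  have H : (a, b) \notin [set (a0, a0) | a0 in A] by apply/imsetP => -[c _ [E1 E2]]; apply: ne; rewrite E1 E2.
  by rewrite H.
rewrite cardsD cardsX (setIidPr _); last first.
  by apply/subsetP => _ /imsetP[a Ha ->]; rewrite inE /= Ha.
rewrite card_in_imset; last by move=> a b _ _ [].
by rewrite mulnBr muln1.
Qed.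


Lemma card_sumT (T : finType) (P : pred T) :
  #|[set x | P x]| = \sum_x (P x : nat).
Proof.
rewrite -sum1_card big_mkcond /=; apply: eq_bigr => x _.
by rewrite inE; case: (P x).
Qed.

Lemma three_elems (T : finType) (S : {set T}) : 2 < #|S| ->
  exists x1 x2 x3, [/\ x1 \in S, x2 \in S, x3 \in S & uniq [:: x1; x2; x3]].
Proof.
move=> H.
have [x1 H1] : exists x1, x1 \in S by apply/set0Pn; rewrite -card_gt0; lia.
have H' : 1 < #|S :\ x1| by move: H; rewrite (cardsD1 x1 S) H1; lia.
have [x2 H2] : exists x2, x2 \in S :\ x1 by apply/set0Pn; rewrite -card_gt0; lia.
have H'' : 0 < #|S :\ x1 :\ x2| by move: H'; rewrite (cardsD1 x2 (S :\ x1)) H2; lia.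
have [x3 H3] : exists x3, x3 \in S :\ x1 :\ x2 by apply/set0Pn; rewrite -card_gt0.
move: H2 H3; rewrite !inE => /andP[n21 H2] /and3P[n32 n31 H3].
exists x1, x2, x3; split => //=; rewrite !inE !negb_or andbT.
by rewrite eq_sym n21 eq_sym n31 eq_sym n32.
Qed.
Lemma uniq3 (T : eqType) (a b c : T) : a != b -> a != c -> b != c -> uniq [:: a; b; c].
Proof. by move=> ab ac bc; rewrite /= !inE !negb_or ab ac bc. Qed.

Lemma negbNE_sym (T : eqType) (a b : T) : a != b -> b != a.
Proof. by rewrite eq_sym. Qed.

Lemma uniq3P (T : eqType) (a b c : T) : uniq [:: a; b; c] -> [/\ a != b, a != c & b != c].
Proof. by rewrite /= !inE !negb_or andbT => /andP[/andP[-> ->] ->]. Qed.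


Lemma amgm2 a b : 2 * (a * b) <= a ^ 2 + b ^ 2.
Proof.
wlog le : a b / a <= b.
  move=> H; case: (leqP a b) => [ab|/ltnW ba]; first exact: H.
  by rewrite [a * b]mulnC addnC; apply: H.
rewrite -(subnK le); set k := b - a; rewrite -!mulnn; nia.
Qed.

Lemma CS (T : finType) (A : {set T}) (f : T -> nat) :
  (\sum_(x in A) f x) ^ 2 <= #|A| * \sum_(x in A) f x ^ 2.
Proof.
have H : 2 * (\sum_(x in A) \sum_(y in A) f x * f y) <=
         \sum_(x in A) \sum_(y in A) (f x ^ 2 + f y ^ 2).
  rewrite big_distrr /=; apply: leq_sum => x _; rewrite big_distrr /=.
  apply: leq_sum => y _; exact: amgm2.
have E1 : \sum_(x in A) \sum_(y in A) f x * f y = (\sum_(x in A) f x) ^ 2.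
  rewrite -mulnn big_distrl /=; apply: eq_bigr => x _; by rewrite big_distrr.
have E2 : \sum_(x in A) \sum_(y in A) (f x ^ 2 + f y ^ 2) =
          2 * (#|A| * \sum_(x in A) f x ^ 2).
  rewrite (eq_bigr (fun x => #|A| * f x ^ 2 + \sum_(y in A) f y ^ 2)); last first.
    by move=> x _; rewrite big_split /= sum_nat_const.
  by rewrite big_split /= sum_nat_const -big_distrr /=; lia.
move: H; rewrite E1 E2; lia.
Qed.

Section Part1.
Variables (r n : nat) (V : finType) (part : V -> 'I_r) (E : {set {set V}}) (i0 : 'I_r).
Hypothesis (HU : uniform r E) (HP : partite part n E) (HF : C2_C3_K23_free E).

Lemma linear u v e1 e2 : u != v -> e1 \in E -> e2 \in E ->
  u \in e1 -> v \in e1 -> u \in e2 -> v \in e2 -> e1 = e2.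
Proof.
move=> uv E1 E2 u1 v1 u2 v2; apply/eqP; apply/negPn/negP => ne.
by case: HF => + _; apply; apply: (mkC2 uv ne).
Qed.

Lemma one_per_part e u w : e \in E -> u \in e -> w \in e -> part u = part w -> u = w.
Proof.
move=> eE ue we puw; have := HP.2 e eE (part u) => /eqP /cards1P [x Hx].
have : u \in [set v in e | part v == part u] by rewrite inE ue eqxx.
have : w \in [set v in e | part v == part u] by rewrite inE we puw eqxx.
by rewrite Hx !inE => /eqP -> /eqP ->.
Qed.

Definition V1 := [set v | part v == i0].
Definition O := ~: V1.
Definition D x := #|[set e in E | x \in e]|.

Lemma sumD : \sum_(x in O) D x = (r - 1) * #|E|.
Proof.
rewrite /D (eq_bigr (fun x => \sum_(e in E) ((x \in e) : nat))); last first.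
  by move=> x _; rewrite card_sum.
rewrite exchange_big /= mulnC -sum_nat_const; apply: eq_bigr => e eE.
rewrite -card_sum -(HU eE) -(cardsID V1 e).
have -> : #|e :&: V1| = 1.
  rewrite -(HP.2 e eE i0); apply: eq_card => v; by rewrite !inE.
  rewrite add1n subSS subn0; apply: eq_card => v; by rewrite !inE andbC.
Qed.

Lemma card_V : #|V| = r * n.
Proof.
rewrite -sum1_card (partition_big part xpredT) //=.
rewrite (eq_bigr (fun _ => n)); first by rewrite sum_nat_const card_ord.
move=> i _; rewrite -(HP.1 i) -sum1_card; apply: eq_bigl => v; by rewrite inE.
Qed.

Lemma card_O : #|O| = (r - 1) * n.
Proof.
have := cardsC V1; rewrite card_V /O.
have -> : #|V1| = n by rewrite -(HP.1 i0).
move=> H; rewrite mulnBl mul1n -H; lia.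
Qed.


Definition cherry x u w : bool :=
  [&& part u == i0, part w == i0, u != w &
      [exists e1 in E, exists e2 in E,
         [&& e1 != e2, u \in e1, x \in e1, w \in e2 & x \in e2]]].

Definition v1 (d : V) (e : {set V}) := odflt d [pick v in e | part v == i0].

Lemma v1P d e : e \in E -> v1 d e \in e /\ part (v1 d e) = i0.
Proof.
move=> eE; rewrite /v1; case: pickP => [v /andP[ve /eqP pv] | H] //=.
have := HP.2 e eE i0.
rewrite (_ : [set v in e | part v == i0] = set0) ?cards0 //.
by apply/setP => v; rewrite !inE; exact: H v.
Qed.

Lemma pairs_bound x : x \in O ->
  D x * (D x - 1) <= #|[set p : V * V | cherry x p.1 p.2]|.
Proof.
rewrite inE inE => xO.
rewrite /D -card_offdiag.
set Ex := [set e in E | x \in e].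
pose g := fun p : {set V} * {set V} => (v1 x p.1, v1 x p.2).
rewrite -(@card_in_imset _ _ g); last first.
  move=> [a b] [a' b']; rewrite !inE /= => /and3P[/andP[aE xa] /andP[bE xb] ab].
  move=> /and3P[/andP[aE' xa'] /andP[bE' xb'] ab'] [Ha Hb].
  have [va pa] := v1P x aE; have [vb pb] := v1P x bE.
  have [va' pa'] := v1P x aE'; have [vb' pb'] := v1P x bE'.
  have nx : forall y, part y = i0 -> y != x.
    by move=> y py; apply/eqP => yx; move: xO; rewrite -yx py eqxx.
  congr pair.
  - apply: (linear (nx _ pa) aE aE' va xa); by rewrite ?Ha.
  - apply: (linear (nx _ pb) bE bE' vb xb); by rewrite ?Hb.
apply: subset_leq_card; apply/subsetP => _ /imsetP[[a b] Hab ->].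
move: Hab; rewrite !inE /= => /and3P[/andP[aE xa] /andP[bE xb] ab].
have [va pa] := v1P x aE; have [vb pb] := v1P x bE.
rewrite /cherry /= pa pb !eqxx /=.
apply/andP; split.
  apply/eqP => eab.
  have nx : v1 x a != x.
    by apply/eqP => yx; move: xO; rewrite -yx pa eqxx.
  move/eqP: ab; apply; apply: (linear nx aE bE va xa); by rewrite ?eab.
apply/existsP; exists a; rewrite aE /=; apply/existsP; exists b.
by rewrite bE ab va xa vb xb.
Qed.

Lemma share_contra w x x' e1 e2 e1' e2' : x != x' -> part w = i0 ->
  part x != i0 -> part x' != i0 -> e1 != e2 -> e1' != e2' ->
  e1 \in E -> e2 \in E -> e1' \in E -> e2' \in E ->
  x \in e1 -> x \in e2 -> x' \in e1' -> x' \in e2' -> w \in e2 -> w \in e2' ->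
  e1 != e1'.
Proof.
move=> xx' pw px px' e12 e12' E1 E2 E1' E2' x1 x2 x1' x2' w2 w2'.
apply/eqP => ee; subst e1'.
case: HF => _ [+ _]; apply.
apply: (@mkC3 _ _ x w x' e2 e2' e1) => //.
- apply: uniq3 => //; apply/eqP => E0.
  + by move: px; rewrite E0 pw eqxx.
  + by move: px'; rewrite -E0 pw eqxx.
- apply: uniq3; rewrite 1?eq_sym //.
  apply/eqP => E0; subst e2'.
  by move/eqP: e12; apply; apply: (linear xx' E1 E2).
Qed.

Lemma fiber_le2 u w :
  #|[set x in O | cherry x u w]| <= 2 * [&& part u == i0, part w == i0 & u != w].
Proof.
case: (boolP [&& part u == i0, part w == i0 & u != w]) => C; last first.
  rewrite muln0 leqn0 cards_eq0; apply/eqP/setP => x.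
  rewrite !inE; apply/negP => /andP[_ /and4P[a b c _]]; apply: (negP C).
  by rewrite a b c.
rewrite muln1 leqNgt; apply/negP => H3.
have [x1 [x2 [x3 [H1 H2 H3' U]]]] := three_elems H3.
move/and3P: C => [/eqP pu /eqP pw uw].
have getE : forall x, x \in [set x in O | cherry x u w] ->
   part x != i0 /\ exists a b, [/\ a \in E, b \in E, a != b &
        [/\ u \in a, x \in a, w \in b & x \in b]].
  move=> x; rewrite !inE => /andP[px /and4P[_ _ _ /existsP[a /andP[aE /existsP[b /andP[bE H]]]]]].
  split => //; exists a, b; move/and5P: H => [? ? ? ? ?]; by split.
have [px1 [a1 [b1 [a1E b1E ab1 [ua1 xa1 wb1 xb1]]]]] := getE _ H1.
have [px2 [a2 [b2 [a2E b2E ab2 [ua2 xa2 wb2 xb2]]]]] := getE _ H2.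
have [px3 [a3 [b3 [a3E b3E ab3 [ua3 xa3 wb3 xb3]]]]] := getE _ H3'.
have pairL : forall x x' a b a' b', x != x' -> part x != i0 -> part x' != i0 ->
    a \in E -> b \in E -> a' \in E -> b' \in E -> a != b -> a' != b' ->
    u \in a -> x \in a -> w \in b -> x \in b ->
    u \in a' -> x' \in a' -> w \in b' -> x' \in b' ->
    [&& a != a', b != b', a != b' & b != a'].
  move=> x x' a b a' b' xx' px px' aE bE aE' bE' ab ab' ua xa wb xb ua' xa' wb' xb'.
  apply/and4P; split.
  - exact: (share_contra xx' pw px px' ab ab' aE bE aE' bE').
  - exact: (share_contra xx' pu px px' (negbNE_sym ab) (negbNE_sym ab') bE aE bE' aE').
  - apply/eqP => E0; subst b'; move/eqP: uw; apply; exact: (one_per_part aE ua wb' (etrans pu (esym pw))).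
  - apply/eqP => E0; subst a'; move/eqP: uw; apply; exact: (one_per_part bE ua' wb (etrans pu (esym pw))).
have [x12 x13 x23] := uniq3P U.
have /and4P[n1 n2 n3 n4] := pairL _ _ _ _ _ _ x12 px1 px2 a1E b1E a2E b2E ab1 ab2 ua1 xa1 wb1 xb1 ua2 xa2 wb2 xb2.
have /and4P[n5 n6 n7 n8] := pairL _ _ _ _ _ _ x13 px1 px3 a1E b1E a3E b3E ab1 ab3 ua1 xa1 wb1 xb1 ua3 xa3 wb3 xb3.
have /and4P[n9 n10 n11 n12] := pairL _ _ _ _ _ _ x23 px2 px3 a2E b2E a3E b3E ab2 ab3 ua2 xa2 wb2 xb2 ua3 xa3 wb3 xb3.
case: HF => _ [_]; apply.
have nx : forall x, part x != i0 -> (u != x) && (w != x).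
  move=> x px; apply/andP; split; apply/eqP => E0; move: px; by rewrite -E0 ?pu ?pw eqxx.
have /andP[ux1 wx1] := nx _ px1; have /andP[ux2 wx2] := nx _ px2.
have /andP[ux3 wx3] := nx _ px3.
apply: (@mkK23 _ _ u w x1 x2 x3 a1 a2 a3 b1 b2 b3) => //.
- rewrite /= !inE !negb_or; repeat (apply/andP; split) => //.
- rewrite /= !inE !negb_or; repeat (apply/andP; split) => //; by rewrite eq_sym.
- by rewrite /= a1E a2E a3E b1E b2E b3E.
Qed.

Lemma sum_cherry : \sum_(x in O) D x * (D x - 1) <= 2 * (n * (n - 1)).
Proof.
have step1 : \sum_(x in O) D x * (D x - 1) <=
             \sum_(x in O) \sum_(p : V * V) (cherry x p.1 p.2 : nat).
  apply: leq_sum => x xO; rewrite -card_sumT; exact: pairs_bound.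
apply: leq_trans step1 _; rewrite exchange_big /=.
have step2 : \sum_(p : V * V) \sum_(x in O) (cherry x p.1 p.2 : nat) <=
   \sum_(p : V * V) 2 * [&& part p.1 == i0, part p.2 == i0 & p.1 != p.2].
  apply: leq_sum => p _; rewrite -card_sum; exact: fiber_le2.
apply: leq_trans step2 _; rewrite -big_distrr /= -card_sumT.
have -> : #|[set p : V * V | [&& part p.1 == i0, part p.2 == i0 & p.1 != p.2]]|
          = #|V1| * (#|V1| - 1).
  by rewrite -card_offdiag; apply: eq_card => p; rewrite !inE.
by have -> : #|V1| = n by rewrite -(HP.1 i0).
Qed.

Lemma main_nat : 0 < r - 1 ->
  (r - 1) * #|E| ^ 2 <= n * (2 * (n * (n - 1)) + (r - 1) * #|E|).
Proof.
move=> c0.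
have cs := CS O D; rewrite sumD card_O in cs.
have sq : \sum_(x in O) D x ^ 2 = \sum_(x in O) D x * (D x - 1) + \sum_(x in O) D x.
  by rewrite -big_split /=; apply: eq_bigr => x _; case: (D x) => // k; nia.
rewrite sq sumD in cs.
have sc := sum_cherry.
set c := r - 1 in c0 cs sc *; set m := #|E| in cs *.
set S := \sum_(x in O) D x * (D x - 1) in cs sc.
have : c * (c * m ^ 2) <= c * (n * (2 * (n * (n - 1)) + c * m)).
  apply: leq_trans (_ : (c * n) * (S + c * m) <= _).
    by move: cs; rewrite expnMn; nia.
  by rewrite -mulnA leq_mul2l leq_mul2l leq_add2r sc !orbT.
by rewrite leq_mul2l => /orP[/eqP c00|//]; rewrite c00 in c0.
Qed.
End Part1.

Local Open Scope ring_scope.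

Lemma final_real (R : rcfType) (c m n : nat) : (0 < c)%N ->
  (c * m ^ 2 <= n * (2 * (n * (n - 1)) + c * m))%N ->
  (m%:R : R) <= Num.sqrt (2 / c%:R) * (n%:R * Num.sqrt n%:R) + n%:R.
Proof.
move=> c0 Hn.
have Hn' : (c * m ^ 2 <= 2 * n ^ 3 + c * n * m)%N.
  apply: leq_trans Hn _; have : (n * (n - 1) <= n * n)%N by rewrite leq_mul2l leq_subr orbT.
  rewrite (_ : (n ^ 3 = n * (n * n))%N); last by rewrite !expnS expn0 muln1.
  nia.
move: Hn'; rewrite -(ler_nat R) natrD !natrM => H.
set C := (c%:R : R) in H *; set M := (m%:R : R) in H *; set N := (n%:R : R) in H *.
have hC : 0 < C by rewrite ltr0n.
have hM : 0 <= M by rewrite ler0n.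
have hN : 0 <= N by rewrite ler0n.
set s := Num.sqrt (2 / C) * (N * Num.sqrt N).
have hs0 : 0 <= s by rewrite mulr_ge0 ?sqrtr_ge0 // mulr_ge0 ?sqrtr_ge0.
have hs2 : C * s ^+ 2 = 2 * N ^+ 3.
  rewrite /s !exprMn !sqr_sqrtr ?divr_ge0 ?ler0n //.
  by field; rewrite gt_eqF.
rewrite leNgt; apply/negP => Hlt.
have h1 : 0 < M * (M - N - s) by apply: mulr_gt0; lra.
have h4 : s * s <= M * s by rewrite ler_wpM2r //; lra.
have h1' : 0 < C * (M * (M - N - s)) by apply: mulr_gt0.
have h4' : 0 <= C * (M * s - s * s) by apply: mulr_ge0; [exact: ltW | rewrite subr_ge0].
nra.
Qed.






Section Alg.
Variable F : fieldType.
Hypothesis h2 : (2%:R : F) != 0.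

Lemma tri_alg (X0 X1 X2 Y0 Y1 Y2 al be t0 t1 t2 : F) :
  al != 0 -> be != 0 -> al + be != 0 ->
  X1 = X0 + al * t0 -> X2 = X1 + be * t1 -> X0 = X2 - (al + be) * t2 ->
  Y1 = Y0 + al * t0 ^+ 2 -> Y2 = Y1 + be * t1 ^+ 2 -> Y0 = Y2 - (al + be) * t2 ^+ 2 ->
  t0 = t1.
Proof.
move=> a0 b0 ab0 e1 e2 e3 f1 f2 f3.
rewrite e1 in e2; rewrite e2 in e3; rewrite f1 in f2; rewrite f2 in f3.
have L1 : al * (t0 - t2) + be * (t1 - t2) = 0.
  transitivity ((X0 + al * t0 + be * t1 - (al + be) * t2) - X0); first ring.
  by rewrite -e3 subrr.
have L2 : al * (t0 ^+ 2 - t2 ^+ 2) + be * (t1 ^+ 2 - t2 ^+ 2) = 0.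
  transitivity ((Y0 + al * t0 ^+ 2 + be * t1 ^+ 2 - (al + be) * t2 ^+ 2) - Y0); first ring.
  by rewrite -f3 subrr.
have L4 : al * (t0 - t2) * ((t0 - t2) - (t1 - t2)) = 0.
  transitivity ((al * (t0 ^+ 2 - t2 ^+ 2) + be * (t1 ^+ 2 - t2 ^+ 2))
     - (2 * t2 + (t1 - t2)) * (al * (t0 - t2) + be * (t1 - t2))); first ring.
  by rewrite L1 L2; ring.
have [u0|uv] : t0 - t2 = 0 \/ (t0 - t2) - (t1 - t2) = 0.
  move/eqP: L4; rewrite !mulf_eq0 (negbTE a0) orFb => /orP[/eqP->|/eqP->]; by [left|right].
- move: L1; rewrite u0 mulr0 add0r => /eqP; rewrite mulf_eq0 (negbTE b0) orFb subr_eq0 => /eqP ->.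
  by apply/eqP; rewrite -subr_eq0 u0.
- move/eqP: uv; rewrite subr_eq0 => /eqP uv.
  move: L1; rewrite uv -mulrDl => /eqP; rewrite mulf_eq0 (negbTE ab0) orFb subr_eq0 => /eqP e12.
  by move/eqP: uv; rewrite e12 subrr subr_eq0 => /eqP ->.
Qed.

Lemma quad3 (A B C s1 s2 s3 : F) : A != 0 -> s1 != s2 -> s1 != s3 -> s2 != s3 ->
  A * s1 ^+ 2 + B * s1 + C = 0 -> A * s2 ^+ 2 + B * s2 + C = 0 ->
  A * s3 ^+ 2 + B * s3 + C = 0 -> False.
Proof.
move=> A0 n12 n13 n23 r1 r2 r3.
have H : forall x y, x != y -> A * x ^+ 2 + B * x + C = 0 -> A * y ^+ 2 + B * y + C = 0 ->
   A * (x + y) + B = 0.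
  move=> x y nxy rx ry.
  have : (x - y) * (A * (x + y) + B) = 0.
    transitivity ((A * x ^+ 2 + B * x + C) - (A * y ^+ 2 + B * y + C)); first ring.
    by rewrite rx ry subrr.
  by move/eqP; rewrite mulf_eq0 subr_eq0 (negbTE nxy) orFb => /eqP.
have := H _ _ n12 r1 r2; have := H _ _ n13 r1 r3.
move=> g1 g2.
have : A * (s3 - s2) = 0 by transitivity ((A * (s1 + s3) + B) - (A * (s1 + s2) + B)); [ring | rewrite g1 g2 subrr].
by move/eqP; rewrite mulf_eq0 (negbTE A0) subr_eq0 eq_sym (negbTE n23).
Qed.

Lemma quad_root (c1 c2 s t X1 X2 Y1 Y2 y1 y2 : F) :
  y1 = X1 + c1 * s -> y1 = X2 + c2 * t -> y2 = Y1 + c1 * s ^+ 2 -> y2 = Y2 + c2 * t ^+ 2 ->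
  (c1 * (c2 - c1)) * s ^+ 2 + (- (2 * (X1 - X2) * c1)) * s
     + (c2 * (Y1 - Y2) - (X1 - X2) ^+ 2) = 0.
Proof.
move=> e1 e2 e3 e4.
have -> : X1 = y1 - c1 * s by rewrite e1; ring.
have -> : X2 = y1 - c2 * t by rewrite e2; ring.
have -> : Y1 = y2 - c1 * s ^+ 2 by rewrite e3; ring.
have -> : Y2 = y2 - c2 * t ^+ 2 by rewrite e4; ring.
ring.
Qed.

Lemma lemA (c X1 X2 Y1 Y2 s t s' t' : F) : c != 0 -> (X1 != X2) || (Y1 != Y2) ->
  X1 + c * s = X2 + c * t -> Y1 + c * s ^+ 2 = Y2 + c * t ^+ 2 ->
  X1 + c * s' = X2 + c * t' -> Y1 + c * s' ^+ 2 = Y2 + c * t' ^+ 2 -> s = s'.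
Proof.
move=> c0 nX e1 e2 e3 e4.
have d1 : c * (s - t) = X2 - X1.
  transitivity ((X1 + c * s) - X1 - c * t); first ring. by rewrite e1; ring.
have d1' : c * (s' - t') = X2 - X1.
  transitivity ((X1 + c * s') - X1 - c * t'); first ring. by rewrite e3; ring.
have d2 : c * ((s - t) * (s + t)) = Y2 - Y1.
  transitivity ((Y1 + c * s ^+ 2) - Y1 - c * t ^+ 2); first ring. by rewrite e2; ring.
have d2' : c * ((s' - t') * (s' + t')) = Y2 - Y1.
  transitivity ((Y1 + c * s' ^+ 2) - Y1 - c * t' ^+ 2); first ring. by rewrite e4; ring.
have st : s - t = s' - t' by apply: (mulfI c0); rewrite d1 d1'.
have [st0|st0] := eqVneq (s - t) 0.
  exfalso.
  have X12 : X2 - X1 = 0 by rewrite -d1 st0 mulr0.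
  have Y12 : Y2 - Y1 = 0 by rewrite -d2 st0 mul0r mulr0.
  move/eqP: X12; move/eqP: Y12; rewrite !subr_eq0 => /eqP Y12 /eqP X12.
  by move: nX; rewrite X12 Y12 !eqxx.
have sp : s + t = s' + t'.
  apply: (mulfI st0); apply: (mulfI c0); rewrite d2 {1}st d2'; done.
apply: (mulfI h2).
transitivity ((s - t) + (s + t)); first ring.
by rewrite st sp; ring.
Qed.

End Alg.

Lemma pig3 (a b c i : 'I_3) : a != i -> b != i -> c != i -> a = b \/ a = c \/ b = c.
Proof.
move: a b c i => [a ha] [b hb] [c hc] [i hi]; rewrite -!val_eqE /= => n1 n2 n3.
have : (a = b \/ a = c \/ b = c)%N by lia.
case=> [e|[e|e]]; [left|right; left|right; right]; exact: val_inj.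
Qed.

Lemma pig3b (a b c i j : 'I_3) : i != j -> a != i -> b != i -> c != i ->
  a != j -> b != j -> c != j -> a = b /\ a = c.
Proof.
move: a b c i j => [a ha] [b hb] [c hc] [i hi] [j hj]; rewrite -!val_eqE /= => n0 n1 n2 n3 n4 n5 n6.
have [e1 e2] : (a = b /\ a = c)%N by lia.
by split; apply: val_inj.
Qed.

Section Constr.
Variable F : fieldType.
Hypothesis h2 : (2%:R : F) != 0.

Definition kap (i : 'I_3) : F := if val i == 0%N then 0 else if val i == 1%N then 1 else -1.
Definition pt (i : 'I_3) (a : F * F) (t : F) : F * F := (a.1 + kap i * t, a.2 + kap i * t ^+ 2).

Lemma kap_inj i j : kap i = kap j -> i = j.
Proof.
have k01 : (0 : F) != 1 by rewrite eq_sym oner_neq0.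
have k02 : (0 : F) != -1 by rewrite eq_sym oppr_eq0 oner_neq0.
have k12 : (1 : F) != -1.
  apply/eqP => E; move: h2; by rewrite mulr2n {2}E addrN eqxx.
move: i j => [[|[|[|?]]] ?] [[|[|[|?]]] ?] //= E; try (apply: val_inj => //);
  move: E; rewrite /kap /= => /eqP; rewrite ?(negbTE k01) ?(negbTE k02) ?(negbTE k12)
   ?(eq_sym 1 0) ?(eq_sym (-1) 0) ?(eq_sym (-1) 1) ?(negbTE k01) ?(negbTE k02) ?(negbTE k12) //.
Qed.

Lemma kap_neq i j : i != j -> kap j - kap i != 0.
Proof. by move=> ij; rewrite subr_eq0; apply/eqP => /kap_inj E; move: ij; rewrite E eqxx. Qed.

Lemma adj_diff (x y a : F * F) (i k : 'I_3) t : x = pt i a t -> y = pt k a t ->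
  y.1 = x.1 + (kap k - kap i) * t /\ y.2 = x.2 + (kap k - kap i) * t ^+ 2.
Proof. by move=> -> -> /=; split; ring. Qed.

Lemma pt_inj_a i a a' t : pt i a t = pt i a' t -> a = a'.
Proof.
case: a a' => [a1 a2] [b1 b2] [/addIr E1 /addIr E2]; by rewrite /= E1 E2.
Qed.

Lemma samepart (v w : 'I_3 * (F * F)) a t :
  v.2 = pt v.1 a t -> w.2 = pt w.1 a t -> v.1 = w.1 -> v = w.
Proof.
case: v w => [i x] [j y] /= -> -> E; by rewrite E.
Qed.

Lemma lin (v w : 'I_3 * (F * F)) a t a' t' : v != w ->
  v.2 = pt v.1 a t -> w.2 = pt w.1 a t -> v.2 = pt v.1 a' t' -> w.2 = pt w.1 a' t' ->
  a = a' /\ t = t'.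
Proof.
move=> vw e1 e2 e3 e4.
have ij : v.1 != w.1 by apply/eqP => E; move: vw; rewrite (samepart e1 e2 E) eqxx.
have [d1 _] := adj_diff e1 e2; have [d3 _] := adj_diff e3 e4.
have tt' : t = t'.
  apply: (mulfI (kap_neq ij)); apply: (addrI (v.2).1); by rewrite -d1 -d3.
split => //; rewrite -tt' in e3; apply: (@pt_inj_a v.1 a a' t); by rewrite -e1 -e3.
Qed.

Lemma tri (v0 v1 v2 : 'I_3 * (F * F)) a0 t0 a1 t1 a2 t2 :
  v0 != v1 -> v1 != v2 -> v2 != v0 ->
  v0.2 = pt v0.1 a0 t0 -> v1.2 = pt v1.1 a0 t0 ->
  v1.2 = pt v1.1 a1 t1 -> v2.2 = pt v2.1 a1 t1 ->
  v2.2 = pt v2.1 a2 t2 -> v0.2 = pt v0.1 a2 t2 -> a0 = a1 /\ t0 = t1.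
Proof.
move=> n01 n12 n20 e0 e1 e1' e2 e2' e0'.
have p01 : v0.1 != v1.1 by apply/eqP => E; move: n01; rewrite (samepart e0 e1 E) eqxx.
have p12 : v1.1 != v2.1 by apply/eqP => E; move: n12; rewrite (samepart e1' e2 E) eqxx.
have p02 : v0.1 != v2.1 by apply/eqP => E; move: n20; rewrite (samepart e0' e2' E) eqxx.
have [d1 f1] := adj_diff e0 e1; have [d2 f2] := adj_diff e1' e2; have [d3 f3] := adj_diff e2' e0'.
set al := kap v1.1 - kap v0.1 in d1 f1.
set be := kap v2.1 - kap v1.1 in d2 f2.
have ab : al + be = kap v2.1 - kap v0.1 by rewrite /al /be; ring.
have d3' : v0.2.1 = v2.2.1 - (al + be) * t2 by rewrite d3 ab; ring.
have f3' : v0.2.2 = v2.2.2 - (al + be) * t2 ^+ 2 by rewrite f3 ab; ring.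
have tt : t0 = t1.
  apply: (tri_alg (kap_neq p01) (kap_neq p12) _ d1 d2 d3' f1 f2 f3').
  by rewrite ab kap_neq.
split => //; rewrite -tt in e1'; apply: (@pt_inj_a v1.1 a0 a1 t0); by rewrite -e1 -e1'.
Qed.

End Constr.
Arguments kap {F}.

Section Free.
Variable F : fieldType.
Hypothesis h2 : (2%:R : F) != 0.
Local Notation V0 := ('I_3 * (F * F))%type.

Lemma pairA (u1 u2 y y' : V0) a s b t a' s' b' t' :
  u1.1 = u2.1 -> u1 != u2 -> y.1 = y'.1 -> y.1 != u1.1 ->
  u1.2 = pt u1.1 a s -> y.2 = pt y.1 a s -> u2.2 = pt u2.1 b t -> y.2 = pt y.1 b t ->
  u1.2 = pt u1.1 a' s' -> y'.2 = pt y'.1 a' s' -> u2.2 = pt u2.1 b' t' -> y'.2 = pt y'.1 b' t' ->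
  y = y'.
Proof.
move=> p12 n12 pyy py e1 e2 e3 e4 e5 e6 e7 e8.
have [d1 f1] := adj_diff e1 e2; have [d2 f2] := adj_diff e3 e4.
have [d3 f3] := adj_diff e5 e6; have [d4 f4] := adj_diff e7 e8.
rewrite -p12 in d2 f2 d4 f4; rewrite -pyy in d3 f3 d4 f4.
set c := kap y.1 - kap u1.1 in d1 f1 d2 f2 d3 f3 d4 f4.
have nX : (u1.2.1 != u2.2.1) || (u1.2.2 != u2.2.2).
  case: u1 u2 n12 p12 {e1 e2 e3 e4 e5 e6 e7 e8 d1 f1 d2 f2 d3 f3 d4 f4 c py} => [i [x1 y1]] [j [x2 y2]] /= n12 p12.
  rewrite -negb_and; apply/negP => /andP[/eqP X /eqP Y]; move: n12; by rewrite p12 X Y eqxx.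
have ss := lemA h2 (kap_neq h2 (negbNE_sym py)) nX
   (etrans (esym d1) d2) (etrans (esym f1) f2) (etrans (esym d3) d4) (etrans (esym f3) f4).
clear e1 e2 e3 e4 e5 e6 e7 e8 d2 f2 d4 f4 py nX. rewrite /c in d1 f1 d3 f3 *; clear c.
case: y y' pyy d1 f1 d3 f3 => [i [x1 y1]] [j [x2 y2]] /= -> -> -> -> ->.
by rewrite ss.
Qed.

Lemma tripleB (u1 u2 y0 y1 y2 : V0) a0 s0 b0 t0 a1 s1 b1 t1 a2 s2 b2 t2 :
  u1.1 != u2.1 -> y0.1 = y1.1 -> y0.1 = y2.1 -> y0.1 != u1.1 -> y0.1 != u2.1 ->
  uniq [:: y0; y1; y2] ->
  u1.2 = pt u1.1 a0 s0 -> y0.2 = pt y0.1 a0 s0 -> u2.2 = pt u2.1 b0 t0 -> y0.2 = pt y0.1 b0 t0 ->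
  u1.2 = pt u1.1 a1 s1 -> y1.2 = pt y1.1 a1 s1 -> u2.2 = pt u2.1 b1 t1 -> y1.2 = pt y1.1 b1 t1 ->
  u1.2 = pt u1.1 a2 s2 -> y2.2 = pt y2.1 a2 s2 -> u2.2 = pt u2.1 b2 t2 -> y2.2 = pt y2.1 b2 t2 ->
  False.
Proof.
move=> p12 p01 p02 py1 py2 U e1 e2 e3 e4 e5 e6 e7 e8 e9 e10 e11 e12.
have [d0 f0] := adj_diff e1 e2; have [g0 h0] := adj_diff e3 e4.
have [d1 f1] := adj_diff e5 e6; have [g1 h1] := adj_diff e7 e8.
have [d2 f2] := adj_diff e9 e10; have [g2 h2'] := adj_diff e11 e12.
rewrite -p01 in d1 f1 g1 h1; rewrite -p02 in d2 f2 g2 h2'.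
set c1 := kap y0.1 - kap u1.1 in d0 f0 d1 f1 d2 f2.
set c2 := kap y0.1 - kap u2.1 in g0 h0 g1 h1 g2 h2'.
have r0 := quad_root d0 g0 f0 h0.
have r1 := quad_root d1 g1 f1 h1.
have r2 := quad_root d2 g2 f2 h2'.
have A0 : c1 * (c2 - c1) != 0.
  have -> : c2 - c1 = kap u1.1 - kap u2.1 by rewrite /c1 /c2; ring.
  apply: mulf_neq0; apply: kap_neq => //; by rewrite eq_sym.
have sd : forall (y y' : V0) s s', y.1 = y'.1 -> y.2.1 = u1.2.1 + c1 * s ->
   y'.2.1 = u1.2.1 + c1 * s' -> y.2.2 = u1.2.2 + c1 * s ^+ 2 ->
   y'.2.2 = u1.2.2 + c1 * s' ^+ 2 -> y != y' -> s != s'.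
  move=> [i [x z]] [j [x' z']] s s' /= -> -> -> -> -> ne; apply/eqP => ss.
  by move: ne; rewrite ss eqxx.
have [n01 n02 n12] := uniq3P U.
apply: (quad3 A0 (sd _ _ _ _ p01 d0 d1 f0 f1 n01) (sd _ _ _ _ p02 d0 d2 f0 f2 n02) _ r0 r1 r2).
exact: (sd _ _ _ _ (etrans (esym p01) p02) d1 d2 f1 f2 n12).
Qed.
End Free.

Section Fin.
Variable F : finFieldType.
Hypothesis h2 : (2%:R : F) != 0.
Local Notation V0 := ('I_3 * (F * F))%type.

Definition edge (a : F * F) (t : F) : {set V0} := [set (i, pt i a t) | i : 'I_3].
Definition E0 : {set {set V0}} :=
  [set edge p.1 p.2 | p in [set p : (F * F) * F | p.2 != 0]].

Lemma memv v a t : v \in edge a t -> v.2 = pt v.1 a t.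
Proof. by case/imsetP => i _ ->. Qed.

Lemma inE0 e : e \in E0 -> exists a t, e = edge a t.
Proof. by case/imsetP => p _ ->; exists p.1, p.2. Qed.

Lemma noC2 : ~ berge_contains C2_ends E0.
Proof.
move=> [phi [f [pinj [finj H]]]].
have [E1 u1 v1] := H ord0; have [E2 u2 v2] := H ord_max.
rewrite /C2_ends /= in u1 v1 u2 v2.
have [a [t ea]] := inE0 E1; have [a' [t' ea']] := inE0 E2.
rewrite ea in u1 v1; rewrite ea' in u2 v2.
have uv : phi ord0 != phi ord_max by apply/eqP => /pinj /(congr1 val).
have [aa tt] := lin h2 uv (memv u1) (memv v1) (memv u2) (memv v2).
have := finj ord0 ord_max; rewrite ea ea' aa tt => /(_ erefl) E; by have := congr1 val E.
Qed.

Lemma noC3 : ~ berge_contains C3_ends E0.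
Proof.
move=> [phi [f [pinj [finj H]]]].
pose g0 := (inord 0 : 'I_3); pose g1 := (inord 1 : 'I_3); pose g2 := (inord 2 : 'I_3).
have c0 : C3_ends g0 = (g0, g1) by rewrite /C3_ends /g0 /g1 inordK.
have c1 : C3_ends g1 = (g1, g2) by rewrite /C3_ends /g1 /g2 inordK.
have c2 : C3_ends g2 = (g2, g0) by rewrite /C3_ends /g0 /g2 inordK.
have [E0' a0 b0] := H g0; have [E1' a1 b1] := H g1; have [E2' a2 b2] := H g2.
rewrite c0 /= in a0 b0; rewrite c1 /= in a1 b1; rewrite c2 /= in a2 b2.
have [x0 [t0 e0]] := inE0 E0'; have [x1 [t1 e1]] := inE0 E1'; have [x2 [t2 e2]] := inE0 E2'.
rewrite e0 in a0 b0; rewrite e1 in a1 b1; rewrite e2 in a2 b2.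
have d01 : g0 != g1 by rewrite -val_eqE /= !inordK.
have d12 : g1 != g2 by rewrite -val_eqE /= !inordK.
have d20 : g2 != g0 by rewrite -val_eqE /= !inordK.
have nphi : forall g g', g != g' -> phi g != phi g'.
  by move=> g g' ne; apply/eqP => /pinj E; move: ne; rewrite E eqxx.
have [xx tt] := tri h2 (nphi _ _ d01) (nphi _ _ d12) (nphi _ _ d20)
   (memv a0) (memv b0) (memv a1) (memv b1) (memv a2) (memv b2).
move: d01; rewrite -(inj_eq finj) e0 e1 xx tt eqxx //.
Qed.

Lemma noK23 : ~ berge_contains K23_ends E0.
Proof.
move=> [phi [f [pinj [finj H]]]].
pose u1 := phi (inl ord0); pose u2 := phi (inl ord_max).
pose w := fun j : 'I_3 => phi (inr j).
have adj : forall (i : 'I_2) (j : 'I_3), exists a t,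
    (phi (inl i)).2 = pt (phi (inl i)).1 a t /\ (w j).2 = pt (w j).1 a t.
  move=> i j; have [Eg ui wj] := H (i, j); rewrite /K23_ends /= in ui wj.
  have [a [t ea]] := inE0 Eg; rewrite ea in ui wj.
  by exists a, t; split; apply: memv.
have u12 : u1 != u2 by apply/eqP => /pinj [] //.
have wu1 : forall j, w j != u1 by move=> j; apply/eqP => /pinj.
have wu2 : forall j, w j != u2 by move=> j; apply/eqP => /pinj.
have winj : forall j j', j != j' -> w j != w j'.
  by move=> j j' ne; apply/eqP => /pinj [] E; move: ne; rewrite E eqxx.
have pw1 : forall j, (w j).1 != u1.1.
  move=> j; have [a [t [e1 e2]]] := adj ord0 j; apply/eqP => E.
  by move: (wu1 j); rewrite (samepart e2 e1 E) eqxx.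
have pw2 : forall j, (w j).1 != u2.1.
  move=> j; have [a [t [e1 e2]]] := adj ord_max j; apply/eqP => E.
  by move: (wu2 j); rewrite (samepart e2 e1 E) eqxx.
pose j0 := (inord 0 : 'I_3); pose j1 := (inord 1 : 'I_3); pose j2 := (inord 2 : 'I_3).
have d01 : j0 != j1 by rewrite -val_eqE /= !inordK.
have d12 : j1 != j2 by rewrite -val_eqE /= !inordK.
have d02 : j0 != j2 by rewrite -val_eqE /= !inordK.
have [a0 [s0 [ea0 ey0]]] := adj ord0 j0; have [b0 [t0 [eb0 ez0]]] := adj ord_max j0.
have [a1 [s1 [ea1 ey1]]] := adj ord0 j1; have [b1 [t1 [eb1 ez1]]] := adj ord_max j1.
have [a2 [s2 [ea2 ey2]]] := adj ord0 j2; have [b2 [t2 [eb2 ez2]]] := adj ord_max j2.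
case: (eqVneq u1.1 u2.1) => p12.
- have PA := fun y y' a s b t a' s' b' t' => @pairA F h2 u1 u2 y y' a s b t a' s' b' t' p12 u12.
  case: (pig3 (pw1 j0) (pw1 j1) (pw1 j2)) => [E|[E|E]].
  + by move/eqP: (winj _ _ d01); apply; apply: (PA _ _ _ _ _ _ _ _ _ _ E (pw1 j0) ea0 ey0 eb0 ez0 ea1 ey1 eb1 ez1).
  + by move/eqP: (winj _ _ d02); apply; apply: (PA _ _ _ _ _ _ _ _ _ _ E (pw1 j0) ea0 ey0 eb0 ez0 ea2 ey2 eb2 ez2).
  + by move/eqP: (winj _ _ d12); apply; apply: (PA _ _ _ _ _ _ _ _ _ _ E (pw1 j1) ea1 ey1 eb1 ez1 ea2 ey2 eb2 ez2).
- have [E1 E2] := pig3b p12 (pw1 j0) (pw1 j1) (pw1 j2) (pw2 j0) (pw2 j1) (pw2 j2).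
  apply: (tripleB h2 p12 E1 E2 (pw1 j0) (pw2 j0) _ ea0 ey0 eb0 ez0 ea1 ey1 eb1 ez1 ea2 ey2 eb2 ez2).
  by rewrite /= !inE !negb_or !winj.
Qed.

End Fin.


Lemma berge_transfer (W EG : finType) (ends : EG -> W * W) (V0 V : finType)
  (H : V0 -> V) (Hi : V -> V0) (E0 : {set {set V0}}) :
  cancel H Hi -> cancel Hi H ->
  berge_contains ends [set H @: e | e : {set V0} in E0] -> berge_contains ends E0.
Proof.
move=> HK HiK [phi [f [pi [fi P]]]].
have Hiinj : injective Hi := can_inj HiK.
exists (Hi \o phi), (fun g => Hi @: f g); split; [|split].
- by move=> a b /= /Hiinj /pi.
- by move=> a b /= /(imset_inj Hiinj) /fi.
- move=> g; have [fE a b] := P g; case/imsetP: fE => e eE fe.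
  split; [| exact: imset_f | exact: imset_f].
  suff -> : Hi @: f g = e by [].
  rewrite fe; apply/setP => x; apply/imsetP/idP => [[y /imsetP[z zE ->] ->]|xe].
  + by rewrite HK.
  + by exists (H x); [exact: imset_f | rewrite HK].
Qed.

Section Count.
Variable F : finFieldType.
Local Notation V0 := ('I_3 * (F * F))%type.

Lemma edge_inj (a : F * F) (t : F) a' t' : edge a t = edge a' t' -> a = a' /\ t = t'.
Proof.
move=> E.
have m0 : (ord0 : 'I_3, pt ord0 a t) \in edge a' t' by rewrite -E; apply: imset_f.
have m1 : (inord 1 : 'I_3, pt (inord 1) a t) \in edge a' t' by rewrite -E; apply: imset_f.
move/memv: m1 => /=; move/memv: m0 => /=.
case: a a' {E} => [a1 a2] [b1 b2]; rewrite /pt /kap /= inordK // /= !mul0r !mul1r !addr0.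
by move=> [-> ->] [/addrI -> _].
Qed.

Lemma card_edge (a : F * F) (t : F) : #|edge a t| = 3%N.
Proof.
rewrite /edge card_imset ?card_ord //.
by move=> i j [].
Qed.

Lemma card_E0 : #|E0 F| = (#|F| ^ 2 * (#|F| - 1))%N.
Proof.
rewrite /E0 card_in_imset; last first.
  by move=> [a t] [a' t'] _ _ /= /edge_inj [-> ->].
have -> : [set p : (F * F) * F | p.2 != 0] = setX [set: F * F] [set~ (0 : F)].
  by apply/setP => -[a t]; rewrite !inE.
by rewrite cardsX cardsT card_prod cardsC1 subn1 mulnn.
Qed.
End Count.

Lemma part2 (q p k : nat) : prime p -> odd p -> (0 < k)%N -> q = (p ^ k)%N ->
  exists E : {set {set ('I_3 * 'I_(q ^ 2))%type}},
    [/\ uniform 3 E, partite (fun v : 'I_3 * 'I_(q ^ 2) => v.1) (q ^ 2) E,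
        C2_C3_K23_free E & #|E| = (q ^ 2 * (q - 1))%N].
Proof.
move=> pr op k0 ->.
case: (pPrimePowerField pr k0) => F pF cF.
have h2 : (2%:R : F) != 0.
  rewrite -(dvdn_pcharf pF); apply/negP => d.
  have l := dvdn_leq (isT : (0 < 2)%N) d; have g := prime_gt1 pr.
  have p2 : p = 2%N by lia.
  by move: op; rewrite p2.
have cFF : #|{: F * F}| = ((p ^ k) ^ 2)%N by rewrite card_prod cF mulnn.
pose h := fun x : F * F => cast_ord cFF (enum_rank x).
pose hi := fun i : 'I_((p ^ k) ^ 2) => enum_val (cast_ord (esym cFF) i).
have hK : cancel h hi by move=> x; rewrite /h /hi cast_ordK enum_rankK.
have hiK : cancel hi h by move=> i; rewrite /h /hi enum_valK cast_ordKV.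
pose H := fun v : 'I_3 * (F * F) => (v.1, h v.2).
pose Hi := fun v : 'I_3 * 'I_((p ^ k) ^ 2) => (v.1, hi v.2).
have HK : cancel H Hi by move=> [i x]; rewrite /H /Hi /= hK.
have HiK : cancel Hi H by move=> [i x]; rewrite /H /Hi /= hiK.
exists [set H @: e | e : {set 'I_3 * (F * F)} in E0 F]; split.
- move=> e' /imsetP[e eE ->]; have [a [t ->]] := inE0 eE.
  by rewrite card_imset ?card_edge //; exact: can_inj HK.
- split.
  + move=> i.
    have -> : [set v : 'I_3 * 'I_((p ^ k) ^ 2) | v.1 == i] = setX [set i] setT.
      by apply/setP => -[x y]; rewrite !inE andbT.
    by rewrite cardsX cards1 cardsT card_ord mul1n.
  + move=> e' /imsetP[e eE ->] i; have [a [t ->]] := inE0 eE.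
    apply/eqP/cards1P; exists (H (i, pt i a t)); apply/setP => v; rewrite !inE.
    apply/andP/eqP => [[/imsetP[w /imsetP[j _ ->] ->] /eqP /= ->] // | ->].
    split => //; apply: imset_f; apply/imsetP; by exists i.
- split; [|split]; move/(berge_transfer HK HiK).
  + exact: (noC2 h2).
  + exact: (noC3 h2).
  + exact: (noK23 h2).
- rewrite card_imset; first by rewrite card_E0 cF.
  exact: imset_inj (can_inj HK).
Qed.

Theorem theorem1p3 :
  (forall (R : rcfType) (r n : nat) (V : finType) (part : V -> 'I_r)
          (E : {set {set V}}),
      (3 <= r)%N -> uniform r E -> partite part n E -> C2_C3_K23_free E ->
      (#|E|%:R : R) <=
        Num.sqrt (2 / (r - 1)%:R) * (n%:R * Num.sqrt n%:R) + n%:R)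
  /\
  (forall (q p k : nat), prime p -> odd p -> (0 < k)%N -> q = (p ^ k)%N ->
     exists E : {set {set ('I_3 * 'I_(q ^ 2))%type}},
       [/\ uniform 3 E, partite (fun v : 'I_3 * 'I_(q ^ 2) => v.1) (q ^ 2) E,
           C2_C3_K23_free E & #|E| = (q ^ 2 * (q - 1))%N]).
Proof.
split.
- move=> R r n V part E r3 HU HP HF.
  have r0 : (0 < r)%N by lia.
  have c0 : (0 < r - 1)%N by lia.
  apply: final_real => //.
  exact: (@main_nat r n V part E (Ordinal r0) HU HP HF c0).
- exact: part2.
Qed.
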